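(* Let $\mathcal Y=\{1,\dots,n\}$, $c\in(0,1)$ constant, and let $\mathcal H$ and $\mathcal R$ be closed under scaling. Let $\ell$ be a multi-class surrogate loss that is realizable $\mathcal H$-consistent with respect to $\ell_{0-1}$ (for $\mathcal H$ closed under scaling), and let $\Phi$ be non-increasing with $\Phi(t)\ge1_{t\le0}$ for all $t$ and $\lim_{t\to+\infty}\Phi(t)=0$. Let $\hat h$ be a minimizer of $\mathcal E_\ell$ over $\mathcal H$ and $\hat r$ a minimizer of $\mathcal E_{\ell_{\Phi,\hat h}}$ over $\mathcal R$. Then for any $(\mathcal H,\mathcal R)$-realizable distribution, $\mathcal E_{\mathsf L_{\rm abs}}(\hat h,\hat r)=0$.
   Context: $\mathsf h(x)=\arg\max_y h(x,y)$ with fixed tie-breaking; $\ell_{0-1}(h,x,y)=1_{\mathsf h(x)\ne y}$; $\mathsf L_{\rm abs}(h,r,x,y)=1_{\mathsf h(x)\ne y}1_{r(x)>0}+c\,1_{r(x)\le0}$; $\ell_{\Phi,h}(r,x,y)=1_{\mathsf h(x)\ne y}\Phi(-r(x))+c\,\Phi(r(x))$. $\mathcal E$ denotes expected loss and $\mathcal E^*$ its infimum over the relevant set. Closed under scaling: $g\in\mathcal G\Rightarrow\nu g\in\mathcal G$ for all $\nu\in\mathbb R$. A distribution is $(\mathcal H,\mathcal R)$-realizable if some $h^*\in\mathcal H,r^*\in\mathcal R$ have $\mathcal E_{\mathsf L_{\rm abs}}(h^*,r^* )=0$. $\ell$ is realizable $\mathcal H$-consistent w.r.t. $\ell_{0-1}$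 if for every distribution with $\mathcal E^*_{\ell_{0-1}}(\mathcal H)=0$ and every sequence $h_k\in\mathcal H$, $\lim_k\mathcal E_\ell(h_k)=\mathcal E^*_\ell(\mathcal H)$ implies $\lim_k\mathcal E_{\ell_{0-1}}(h_k)=0$. *)

(* Defs.v *)
From HB Require Import structures.
From mathcomp Require Import all_boot all_order all_algebra.
From mathcomp Require Import all_classical all_reals all_analysis.
Set Implicit Arguments. Unset Strict Implicit. Unset Printing Implicit Defensive.
Import Order.TTheory GRing.Theory Num.Theory.
Local Open Scope classical_set_scope.
Local Open Scope ring_scope.

(* Label space Y = 'I_n.+1 (n+1 labels), with the discrete sigma-algebra. *)
HB.instance Definition _ (n : nat) := isPointed.Build 'I_n.+1 ord0.
HB.instance Definition _ (n : nat) :=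
  @isMeasurable.Build default_measure_display 'I_n.+1
  discrete_measurable discrete_measurable0
  discrete_measurableC discrete_measurableU.

Section Defs.
Context {d : measure_display} {X : measurableType d} {R : realType} {n : nat}.
Local Notation Y := 'I_n.+1.

Definition hyp := X -> Y -> R.
Definition rej := X -> R.

(* h(x) = argmax_y h(x,y), with the fixed tie-breaking of [arg max] *)
Definition hpred (h : hyp) (x : X) : Y := [arg max_(y > ord0) h x y]%O.

Definition loss01 (h : hyp) (x : X) (y : Y) : R := (hpred h x != y)%:R.

Definition Labs (c : R) (h : hyp) (r : rej) (x : X) (y : Y) : R :=
  (hpred h x != y)%:R * ((0 < r x)%R : bool)%:R + c * ((r x <= 0)%R : bool)%:R.

Definition lossPhi (Phi : R -> R) (c : R) (h : hyp) (r : rej) (x : X) (y : Y)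
  : R := (hpred h x != y)%:R * Phi (- r x) + c * Phi (r x).

Definition Eloss (P : probability (X * Y)%type R) (f : X -> Y -> R) : \bar R :=
  (\int[P]_z (f z.1 z.2)%:E)%E.

Definition Einf (P : probability (X * Y)%type R) (H : set hyp)
  (L : hyp -> X -> Y -> R) : \bar R :=
  ereal_inf [set Eloss P (L h) | h in H].

Definition closed_scaling (G : set rej) : Prop :=
  forall g, G g -> forall nu : R, G (fun x => nu * g x).

Definition closed_scaling2 (G : set hyp) : Prop :=
  forall g, G g -> forall nu : R, G (fun x y => nu * g x y).

Definition realizable_consistent (ell : hyp -> X -> Y -> R) (H : set hyp)
  : Prop :=
  forall P : probability (X * Y)%type R,
    Einf P H loss01 = 0%E ->
    forall hs : nat -> hyp, (forall k, H (hs k)) ->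
      ((fun k => Eloss P (ell (hs k))) @ \oo --> Einf P H ell) ->
      ((fun k => Eloss P (loss01 (hs k))) @ \oo --> 0%E).

Definition realizable (c : R) (P : probability (X * Y)%type R)
  (H : set hyp) (Rs : set rej) : Prop :=
  exists h, exists r, H h /\ Rs r /\ Eloss P (Labs c h r) = 0%E.

End Defs.

(* Main.v *)
Require Import Defs.
From HB Require Import structures.
From mathcomp Require Import all_boot all_order all_algebra.
From mathcomp Require Import all_classical all_reals all_analysis.
From mathcomp Require Import measurable_realfun lra.
Import Order.TTheory GRing.Theory Num.Theory.
Local Open Scope classical_set_scope.
Local Open Scope ring_scope.

Set Implicit Arguments. Unset Strict Implicit. Unset Printing Implicit Defensive.
Section MB.
Context d (T : measurableType d).
Definition mb (p : T -> bool) := measurable [set x | p x].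

Lemma mb_const b : mb (fun _ => b).
Proof.
case: b; rewrite /mb.
  by rewrite (_ : [set _ | _] = setT) //; apply/seteqP; split => x.
by rewrite (_ : [set _ | _] = set0) //; apply/seteqP; split => x.
Qed.

Lemma mb_not p : mb p -> mb (fun x => ~~ p x).
Proof.
move=> mp; rewrite /mb (_ : [set _ | _] = ~` [set x | p x]); first exact: measurableC.
by apply/seteqP; split => x /=; case: (p x).
Qed.

Lemma mb_and p q : mb p -> mb q -> mb (fun x => p x && q x).
Proof.
move=> mp mq; rewrite /mb (_ : [set _ | _] = [set x | p x] `&` [set x | q x]).
  exact: measurableI.
by apply/seteqP; split => x /=; [move/andP|move=> [-> ->]].
Qed.

Lemma mb_all (I : eqType) (p : I -> T -> bool) (r : seq I) :
  (forall i, mb (p i)) -> mb (fun x => all (fun i => p i x) r).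
Proof.
move=> mp; elim: r => [|i r IH] /=; first exact: mb_const.
exact: mb_and.
Qed.

Lemma mb_forall (I : finType) (p : I -> T -> bool) :
  (forall i, mb (p i)) -> mb (fun x => [forall i, p i x]).
Proof.
move=> mp; have := @mb_all I p (enum I) mp.
rewrite /mb (_ : [set x | all _ _] = [set x | [forall i, p i x]]) //.
apply/seteqP; split => x /=.
  by move/allP => H; apply/forallP => i; apply: H; rewrite mem_enum.
by move/forallP => H; apply/allP => i _; apply: H.
Qed.

Lemma mb_exists (I : finType) (p : I -> T -> bool) :
  (forall i, mb (p i)) -> mb (fun x => [exists i, p i x]).
Proof.
move=> mp; have := mb_not (@mb_forall I (fun i x => ~~ p i x) (fun i => mb_not (mp i))).
rewrite /mb (_ : [set x | ~~ _] = [set x | [exists i, p i x]]) //.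
apply/seteqP; split => x /=; rewrite negb_forall.
  by move/existsP => [i]; rewrite negbK => Hi; apply/existsP; exists i.
by move/existsP => [i] Hi; apply/existsP; exists i; rewrite negbK.
Qed.

Lemma mb_eqb p b : mb p -> mb (fun x => p x == b).
Proof.
by case: b => mp; [under eq_fun do rewrite eqb_id | under eq_fun do rewrite eqbF_neg; exact: mb_not].
Qed.

Lemma mb_ler (R : realType) (f g : T -> R) :
  measurable_fun setT f -> measurable_fun setT g -> mb (fun x => f x <= g x).
Proof.
move=> mf mg; have := @measurable_fun_ler _ _ _ _ f g mf mg measurableT [set true].
move=> /(_ ltac:(by [])).
rewrite setTI /mb; congr measurable; apply/seteqP; split => x //=.
Qed.

Lemma mb_indic (R : realType) p : mb p -> measurable_fun setT (fun x => (p x)%:R : R).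
Proof.
move=> mp; rewrite (_ : (fun x => _) = \1_[set x | p x]); first exact: measurable_indic.
apply/funext => x; rewrite indicE.
by case: (boolP (p x)) => px; [rewrite mem_set | rewrite memNset //= (negbTE px)].
Qed.
End MB.
Lemma mb_argmax d (T : measurableType d) (R : realType) m (F : 'I_m.+1 -> T -> R) y :
  (forall i, measurable_fun setT (F i)) ->
  mb (fun x => [arg max_(i > ord0) F i x]%O == y).
Proof.
move=> mF.
pose s x : {ffun 'I_m.+1 -> bool} := [ffun i => [forall j, F j x <= F i x]].
have E x : [arg max_(i > ord0) F i x]%O = odflt ord0 [pick i | s x i].
  rewrite /Order.arg_max /extremum; congr odflt; apply: eq_pick => i /=.
  by rewrite ffunE.
have ms i : mb (fun x => s x i).
  rewrite /mb (_ : [set x | s x i] = [set x | [forall j, F j x <= F i x]]).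
    by apply: mb_forall => j; apply: mb_ler.
  by apply/seteqP; split => x; rewrite /= ffunE.
rewrite /mb (_ : [set x | _] = [set x | [exists b : {ffun 'I_m.+1 -> bool},
   (odflt ord0 [pick i | b i] == y) && [forall i, s x i == b i]]]).
  apply: mb_exists => b; apply: mb_and; first exact: mb_const.
  by apply: mb_forall => i; apply: mb_eqb.
apply/seteqP; split => x /=.
  by rewrite E => Hy; apply/existsP; exists (s x); rewrite Hy; apply/forallP.
move/existsP => [b /andP[Hb /forallP Hs]].
rewrite E (_ : s x = b) //; apply/ffunP => i; exact/eqP.
Qed.
Lemma ind_set (T : Type) (R : realType) (p : T -> bool) z :
  \1_[set x | p x] z = (p z)%:R :> R.
Proof.
by rewrite indicE; case: (boolP (p z)) => pz; [rewrite mem_set | rewrite memNset //= (negbTE pz)].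
Qed.

Lemma null_of_bound d (T : measurableType d) (R : realType) (P : probability T R)
  (p : T -> bool) (f : T -> R) k :
  mb p -> measurable_fun setT f -> 0 < k ->
  (forall z, k * (p z)%:R <= f z) -> (\int[P]_z (f z)%:E = 0)%E ->
  P [set z | p z] = 0%E.
Proof.
move=> mA mf k0 kf f0.
have : (\int[P]_z (k * (p z)%:R)%:E <= \int[P]_z (f z)%:E)%E.
  apply: ge0_le_integral => //.
  - by move=> z _; rewrite lee_fin mulr_ge0 // ltW.
  - apply/measurable_EFinP; apply: measurable_funM; first exact: measurable_cst.
    exact: mb_indic.
  - exact/measurable_EFinP.
  - by move=> z _; rewrite lee_fin.
rewrite f0 (_ : (fun z => _) = (fun z => k%:E * (\1_[set x | p x] z : R)%:E)%E); last first.
  by apply/funext => z; rewrite ind_set EFinM.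
have i0 : forall z, setT z -> (0 <= (\1_[set x | p x] z : R)%:E)%E.
  by move=> z Hz; rewrite ind_set lee_fin.
have mi : measurable_fun setT (fun z => (\1_[set x | p x] z : R)%:E).
  by apply/measurable_EFinP; exact: measurable_indic.
rewrite (ge0_integralZl_EFin _ _ i0 mi (ltW k0)) //.
rewrite integral_indic // setIT pmule_rle0 ?lte_fin // => H.
by apply/eqP; rewrite -measure_le0.
Qed.

Lemma labs_bnd (R : realType) (c : R) (a b : bool) : 0 < c -> c < 1 ->
  c * a%:R <= a%:R * (~~ b)%:R + c * b%:R /\ c * b%:R <= a%:R * (~~ b)%:R + c * b%:R.
Proof. by move=> c0 c1; case: a; case: b => /=; split; lra. Qed.

Unset Implicit Arguments. Set Strict Implicit.

Theorem theorem12 (d : measure_display) (X : measurableType d) (R : realType)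
  (n : nat) (c : R) (H : set (@hyp d X R n)) (Rs : set (@rej d X R))
  (ell : @hyp d X R n -> X -> 'I_n.+1 -> R) (Phi : R -> R) :
  0 < c < 1 ->
  closed_scaling2 H -> closed_scaling Rs ->
  (forall h, H h -> forall y : 'I_n.+1, measurable_fun setT (fun x => h x y)) ->
  (forall r, Rs r -> measurable_fun setT r) ->
  (forall h x y, 0 <= ell h x y) ->
  realizable_consistent ell H ->
  (forall s t : R, s <= t -> Phi t <= Phi s) ->
  (forall t : R, ((t <= 0)%R : bool)%:R <= Phi t) ->
  Phi t @[t --> +oo] --> 0 ->
  forall (P : probability (X * 'I_n.+1)%type R)
         (hhat : @hyp d X R n) (rhat : @rej d X R),
  H hhat -> Eloss P (ell hhat) = Einf P H ell ->
  Rs rhat ->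
  Eloss P (lossPhi Phi c hhat rhat)
    = ereal_inf [set Eloss P (lossPhi Phi c hhat r) | r in Rs] ->
  realizable c P H Rs ->
  Eloss P (Labs c hhat rhat) = 0%E.
Proof.
move=> /andP[c0 c1] sH sR mH mR ell0 Hcons Phidec PhiI Phi0 P hhat rhat
  Hh Eh Rr Er [hs [rs [Hhs [Rrs E0]]]].
set T := (X * 'I_n.+1)%type.
have Phige0 t : 0 <= Phi t by apply: le_trans (PhiI t).
have mPhi : measurable_fun setT Phi.
  by apply: nonincreasing_measurable => // s t; apply: Phidec.
have mr1 r : Rs r -> measurable_fun setT (fun z : T => r z.1).
  by move=> Rr'; apply: measurableT_comp (mR _ Rr') measurable_fst.
have merr h : H h -> mb (fun z : T => hpred h z.1 != z.2).
  move=> Hh'.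
  rewrite (_ : (fun z : T => _) = (fun z : T => ~~ [exists y, (z.2 == y) && (hpred h z.1 == y)])).
    apply: mb_not; apply: mb_exists => y; apply: mb_and.
      have := @measurable_snd _ _ X [the measurableType _ of 'I_n.+1] measurableT [set y] ltac:(by []).
      by rewrite setTI /mb; congr measurable; apply/seteqP; split => z /= /eqP.
    by apply: mb_argmax => i; apply: measurableT_comp (mH _ Hh' i) measurable_fst.
  apply/funext => z; congr negb; apply/eqP/existsP.
    by move=> <-; exists (hpred h z.1); rewrite !eqxx.
  by move=> [y /andP[/eqP -> /eqP]].
have mneg r : Rs r -> mb (fun z : T => r z.1 <= 0).
  by move=> Rr'; apply: mb_ler; [exact: mr1 | exact: measurable_cst].
have mpos r : Rs r -> mb (fun z : T => 0 < r z.1).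
  by move=> Rr'; under eq_fun do rewrite ltNge; apply: mb_not; exact: mneg.
have mLabs h r : H h -> Rs r -> measurable_fun setT (fun z : T => Labs c h r z.1 z.2).
  move=> Hh' Rr'; rewrite /Labs; apply: measurable_funD; apply: measurable_funM.
  - exact: mb_indic (merr _ Hh').
  - exact: mb_indic (mpos _ Rr').
  - exact: measurable_cst.
  - exact: mb_indic (mneg _ Rr').
have Perr : P [set z : T | hpred hs z.1 != z.2] = 0%E.
  apply: (null_of_bound (merr _ Hhs) (mLabs _ _ Hhs Rrs) c0 _ E0).
  by move=> z; rewrite /Labs ltNge; apply: (labs_bnd _ _ c0 c1).1.
have Pneg : P [set z : T | rs z.1 <= 0] = 0%E.
  apply: (null_of_bound (mneg _ Rrs) (mLabs _ _ Hhs Rrs) c0 _ E0).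
  by move=> z; rewrite /Labs ltNge; apply: (labs_bnd _ _ c0 c1).2.
have Eloss01 h : H h -> Eloss P (loss01 h) = P [set z : T | hpred h z.1 != z.2].
  move=> Hh'; rewrite /Eloss /loss01.
  rewrite (_ : (fun z => _) = (fun z : T => (\1_[set z : T | hpred h z.1 != z.2] z : R)%:E)).
    by rewrite integral_indic ?setIT //; exact: merr.
  by apply/funext => z; rewrite ind_set.
have Einf0 : Einf P H loss01 = 0%E.
  apply/eqP; rewrite eq_le; apply/andP; split.
    by rewrite -Perr -Eloss01 //; apply: ereal_inf_lbound; exists hs.
  apply: le_ereal_inf_tmp => _ [h _ <-]; apply: integral_ge0 => z _.
  by rewrite lee_fin /loss01.
have Perrh : P [set z : T | hpred hhat z.1 != z.2] = 0%E.
  have := Hcons P Einf0 (fun _ => hhat) (fun _ => Hh).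
  rewrite Eh => /(_ (cvg_cst _)) /(cvg_lim (@ereal_hausdorff R)).
  by rewrite lim_cst // Eloss01.
pose g (k : nat) (z : T) := c * Phi ((k%:R * rs z.1)%R) * ((0 < rs z.1)%R : bool)%:R.
have Rk (k : nat) : Rs (fun x => (k%:R * rs x)%R) := sR _ Rrs k%:R.
have mlossPhi h r : H h -> Rs r -> measurable_fun setT (fun z : T => lossPhi Phi c h r z.1 z.2).
  move=> Hh' Rr'; rewrite /lossPhi; apply: measurable_funD; apply: measurable_funM.
  - exact: mb_indic (merr _ Hh').
  - apply: measurableT_comp mPhi _; exact: measurable_funN (mr1 _ Rr').
  - exact: measurable_cst.
  - exact: measurableT_comp mPhi (mr1 _ Rr').
have mg (k : nat) : measurable_fun setT (g k).
  apply: measurable_funM; last exact: mb_indic (mpos _ Rrs).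
  apply: measurable_funM; first exact: measurable_cst.
  exact: measurableT_comp mPhi (mr1 _ (Rk k)).
have EPk (k : nat) : Eloss P (lossPhi Phi c hhat (fun x => (k%:R * rs x)%R)) = (\int[P]_z (g k z)%:E)%E.
  rewrite /Eloss; apply: ae_eq_integral => //. all: try (apply/measurable_EFinP; first [exact: mlossPhi | exact: mg]).
  exists ([set z : T | hpred hhat z.1 != z.2] `|` [set z : T | rs z.1 <= 0]); split.
  - by apply: measurableU; [exact: merr | exact: mneg].
  - exact: null_set_setU (merr _ Hh) (mneg _ Rrs) Perrh Pneg.
  move=> z /= Hz; apply: contrapT => Hn; apply: Hz => _.
  have e : (hpred hhat z.1 != z.2) = false by apply: negbTE; apply/negP => e; apply: Hn; left.
  have p : 0 < rs z.1 by rewrite ltNge; apply/negP => q; apply: Hn; right.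
  by rewrite /lossPhi /g p e /= mul0r add0r mulr1.
have g0 k z : 0 <= g k z.
  by rewrite /g; apply: mulr_ge0; [apply: mulr_ge0; [exact: ltW|exact: Phige0]|exact: ler0n].
have conv : \forall z \ae P, setT z -> (fun k => (g k z)%:E) @ \oo --> (cst 0%E z : \bar R).
  apply: aeW => z _ /=.
  apply/fine_cvgP; split; first exact: nearW.
  rewrite /comp /=.
  have [rp|rn] := ltP 0 (rs z.1).
    rewrite /g rp /=; under eq_fun do rewrite mulr1.
    rewrite -(mulr0 c); apply: cvgMl_tmp.
    have kr : (fun k : nat => (k%:R * rs z.1)%R) @ \oo --> +oo.
      apply/cvgryPge => A.
      have H1 := (cvgryPge _).1 (@cvgr_idn R) (A / rs z.1).
      have sub (k : nat) : A / rs z.1 <= k%:R -> A <= k%:R * rs z.1 by rewrite ler_pdivrMr.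
      exact: filterS sub (H1 _).
    exact: (cvg_comp _ _ kr Phi0).
  rewrite /g; have -> : (0 < rs z.1) = false by apply/negbTE; rewrite -leNgt.
  rewrite (_ : (fun k => _) = (fun _ => 0)); last first.
  by apply/funext => k; rewrite /= mulr0.
  by apply/cvgrPdist_lt => e e0; apply: nearW => k; rewrite subrr normr0.
have ig : P.-integrable setT (cst (c * Phi 0)%:E).
  exact: finite_measure_integrable_cst.
have bnd : \forall z \ae P, forall k, setT z -> (`|(g k z)%:E| <= cst (c * Phi 0)%:E z)%E.
  apply: aeW => z k _ /=; rewrite lee_fin ger0_norm //.
  rewrite /g; have [rp|rn] := ltP 0 (rs z.1); rewrite /= ?mulr1 ?mulr0.
    by apply: ler_wpM2l; [exact: ltW | apply: Phidec; apply: mulr_ge0 => //; exact: ltW].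
  by apply: mulr_ge0; [exact: ltW | exact: Phige0].
have [_ _ DC] := @dominated_convergence _ T R P setT measurableT
  (fun k z => (g k z)%:E) (cst 0%E) (cst (c * Phi 0)%:E)
  (fun k => (measurable_EFinP _ _).2 (mg k)) (measurable_cst _) conv ig bnd.
rewrite integral0 in DC.
have Ephi0 : Eloss P (lossPhi Phi c hhat rhat) = 0%E.
  apply/eqP; rewrite eq_le; apply/andP; split; last first.
    apply: integral_ge0 => z _; rewrite lee_fin /lossPhi.
    by apply: addr_ge0; apply: mulr_ge0 => //; exact: ltW.
  rewrite Er -(cvg_lim (@ereal_hausdorff R) DC).
  apply: lime_ge; first exact: (cvgP _ DC).
  apply: nearW => k; rewrite /= -EPk; apply: ereal_inf_lbound.
  by exists (fun x => (k%:R * rs x)%R).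
apply/eqP; rewrite eq_le; apply/andP; split; last first.
  apply: integral_ge0 => z _; rewrite lee_fin /Labs.
  by apply: addr_ge0; apply: mulr_ge0 => //; exact: ltW.
rewrite -Ephi0; apply: ge0_le_integral => //.
- move=> z _; rewrite lee_fin /Labs.
  by apply: addr_ge0; apply: mulr_ge0 => //; exact: ltW.
- by apply/measurable_EFinP; exact: mLabs.
- by apply/measurable_EFinP; exact: mlossPhi.
move=> z _; rewrite lee_fin /Labs /lossPhi; apply: lerD.
  apply: ler_wpM2l => //; apply: le_trans (PhiI _).
  by case: (boolP (0 < rhat z.1)) => p /=; [rewrite oppr_le0 (ltW p) | exact: ler0n].
by apply: ler_wpM2l; [exact: ltW | exact: PhiI].
Qed.
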